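(* For $n\ge2$, there is a well-defined surjective homomorphism $\psi_P:TVP_n\to A_n$ with $\psi_P(\lambda_{kl})=e$ for all $1\le k\ne l\le n$ and $\psi_P(\gamma_j)=\gamma_j$ for $1\le j\le n$, which restricts to the identity on $A_n$. Consequently, with $PL_n=\ker\psi_P$, one has $TVP_n=PL_n\rtimes A_n$.
   Context: For $n\ge 2$, the twisted virtual braid group $TVB_n$ is the group with generators $\sigma_1,\dots,\sigma_{n-1}$, $\rho_1,\dots,\rho_{n-1}$, $\gamma_1,\dots,\gamma_n$ and defining relations: $\sigma_i\sigma_{i+1}\sigma_i=\sigma_{i+1}\sigma_i\sigma_{i+1}$ ($1\le i\le n-2$); $\sigma_i\sigma_j=\sigma_j\sigma_i$ ($|i-j|\ge 2$); $\rho_i^2=1$; $\rho_i\rho_j=\rho_j\rho_i$ ($|i-j|\ge2$); $\rho_i\rho_{i+1}\rho_i=\rho_{i+1}\rho_i\rho_{i+1}$ ($1\le i\le n-2$); $\sigma_i\rho_j=\rho_j\sigma_i$ ($|i-j|\ge 2$); $\rho_i\rho_{i+1}\sigma_i=\sigma_{i+1}\rho_i\rho_{i+1}$ ($1\le i\le n-2$); $\gamma_i^2=1$ and $\gamma_i\gamma_j=\gamma_j\gamma_i$ (all $i,j$); $\gamma_j\rho_i=\rho_i\gamma_j$ and $\gamma_j\sigma_i=\sigma_i\gamma_j$ for $j\notin\{i,i+1\}$; $\rho_i\gamma_i=\gamma_{i+1}\rho_i$ ($1\le i\le n-1$); $\rho_i\sigma_i\rho_i=\gamma_{i+1}\gamma_i\sigma_i\gamma_i\gamma_{i+1}$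 ($1\le i\le n-1$). $\varphi_P:TVB_n\to S_n$ is the homomorphism with $\sigma_i\mapsto(i,i+1)$, $\rho_i\mapsto(i,i+1)$, $\gamma_j\mapsto e$, and $TVP_n=\ker\varphi_P$. $A_n=\langle\gamma_1,\dots,\gamma_n\rangle\le TVP_n$. In $TVB_n$ define $\lambda_{i,i+1}=\rho_i\sigma_i^{-1}$, $\lambda_{i+1,i}=\rho_i\lambda_{i,i+1}\rho_i$ ($1\le i\le n-1$), and for $1\le i<j-1\le n-1$: $\lambda_{ij}=\rho_{j-1}\cdots\rho_{i+1}\lambda_{i,i+1}\rho_{i+1}\cdots\rho_{j-1}$, $\lambda_{ji}=\rho_{j-1}\cdots\rho_{i+1}\lambda_{i+1,i}\rho_{i+1}\cdots\rho_{j-1}$. The elements $\lambda_{kl}$ and $\gamma_j$ generate $TVP_n$. *)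

(* Defs.v *)
(* The twisted virtual braid group TVB_n is
   constructed honestly as a finitely presented group: words in the
   generators and their inverses, modulo the congruence generated by free
   cancellation and the defining relations. Indices are 1-based as in the paper. *)
From mathcomp Require Import all_boot.
Set Implicit Arguments. Unset Strict Implicit. Unset Printing Implicit Defensive.

Inductive gen : Type :=
| Sig of nat
| Rho of nat
| Gam of nat.

(* a letter is a generator together with a flag: true = inverse letter *)
Definition letter := (gen * bool)%type.
Definition word := seq letter.

Definition P (g : gen) : letter := (g, false).
Definition Inv (g : gen) : letter := (g, true).
Definition flip (x : letter) : letter := (x.1, ~~ x.2).
Definition winv (w : word) : word := rev (map flip w).

Definition valid_gen (n : nat) (g : gen) : bool :=
  match g with
  | Sig i | Rho i => (0 < i) && (i < n)
  | Gam j => (0 < j) && (j <= n)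
  end.
Definition valid (n : nat) (w : word) : bool := all (fun x => valid_gen n x.1) w.

Definition far (i j : nat) : bool := (i + 2 <= j) || (j + 2 <= i).

Inductive rel (n : nat) : word -> word -> Prop :=
| r_sbraid i : 0 < i -> i + 1 <= n - 1 ->
    rel n [:: P (Sig i); P (Sig i.+1); P (Sig i)] [:: P (Sig i.+1); P (Sig i); P (Sig i.+1)]
| r_scomm i j : 0 < i < n -> 0 < j < n -> far i j ->
    rel n [:: P (Sig i); P (Sig j)] [:: P (Sig j); P (Sig i)]
| r_rsq i : 0 < i < n -> rel n [:: P (Rho i); P (Rho i)] [::]
| r_rcomm i j : 0 < i < n -> 0 < j < n -> far i j ->
    rel n [:: P (Rho i); P (Rho j)] [:: P (Rho j); P (Rho i)]
| r_rbraid i : 0 < i -> i + 1 <= n - 1 ->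
    rel n [:: P (Rho i); P (Rho i.+1); P (Rho i)] [:: P (Rho i.+1); P (Rho i); P (Rho i.+1)]
| r_srcomm i j : 0 < i < n -> 0 < j < n -> far i j ->
    rel n [:: P (Sig i); P (Rho j)] [:: P (Rho j); P (Sig i)]
| r_mixed i : 0 < i -> i + 1 <= n - 1 ->
    rel n [:: P (Rho i); P (Rho i.+1); P (Sig i)] [:: P (Sig i.+1); P (Rho i); P (Rho i.+1)]
| r_gsq j : 0 < j <= n -> rel n [:: P (Gam j); P (Gam j)] [::]
| r_gcomm i j : 0 < i <= n -> 0 < j <= n ->
    rel n [:: P (Gam i); P (Gam j)] [:: P (Gam j); P (Gam i)]
| r_grcomm i j : 0 < i < n -> 0 < j <= n -> j != i -> j != i.+1 ->
    rel n [:: P (Gam j); P (Rho i)] [:: P (Rho i); P (Gam j)]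
| r_gscomm i j : 0 < i < n -> 0 < j <= n -> j != i -> j != i.+1 ->
    rel n [:: P (Gam j); P (Sig i)] [:: P (Sig i); P (Gam j)]
| r_rg i : 0 < i < n ->
    rel n [:: P (Rho i); P (Gam i)] [:: P (Gam i.+1); P (Rho i)]
| r_rsr i : 0 < i < n ->
    rel n [:: P (Rho i); P (Sig i); P (Rho i)]
          [:: P (Gam i.+1); P (Gam i); P (Sig i); P (Gam i); P (Gam i.+1)].

Inductive tvb_eq (n : nat) : word -> word -> Prop :=
| te_refl w : tvb_eq n w w
| te_sym w1 w2 : tvb_eq n w1 w2 -> tvb_eq n w2 w1
| te_trans w1 w2 w3 : tvb_eq n w1 w2 -> tvb_eq n w2 w3 -> tvb_eq n w1 w3
| te_free u v x : tvb_eq n (u ++ x :: flip x :: v) (u ++ v)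
| te_rel u v l r : rel n l r -> tvb_eq n (u ++ l ++ v) (u ++ r ++ v).

(* phi_P : TVB_n -> S_n, sigma_i, rho_i |-> (i, i+1), gamma_j |-> e;
   permutations of {1..n} are represented as functions on nat. *)
Definition swap (i k : nat) : nat :=
  if k == i then i.+1 else if k == i.+1 then i else k.
Definition gen_perm (g : gen) : nat -> nat :=
  match g with
  | Sig i | Rho i => swap i
  | Gam _ => id
  end.
Definition phiP (w : word) : nat -> nat :=
  foldr (fun x f => gen_perm x.1 \o f) id w.

Definition in_TVP (n : nat) (w : word) : Prop :=
  valid n w /\ forall k, phiP w k = k.

Definition is_gam (x : letter) : bool :=
  match x.1 with Gam _ => true | _ => false end.

Definition in_A (n : nat) (w : word) : Prop :=
  valid n w /\ exists a, [/\ valid n a, all is_gam a & tvb_eq n w a].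

Definition rhoseq (i j : nat) : word :=
  map (fun m => P (Rho m)) (rev (iota i.+1 (j - i.+1))).

Definition lam (k l : nat) : word :=
  if k < l then rhoseq k l ++ [:: P (Rho k); Inv (Sig k)] ++ rev (rhoseq k l)
  else rhoseq l k ++ [:: P (Rho l); P (Rho l); Inv (Sig l); P (Rho l)]
         ++ rev (rhoseq l k).

(* Main.v *)
Require Import Defs.
From mathcomp Require Import all_boot zify.

Definition act (g : gen) (x : nat * bool) : nat * bool :=
  match g with
  | Sig i | Rho i => (swap i x.1, x.2)
  | Gam j => (x.1, (x.1 == j) (+) x.2)
  end.
Fixpoint ev (w : word) (x : nat * bool) : nat * bool :=
  if w is y :: w' then act y.1 (ev w' x) else x.
Definition cw (w : word) (k : nat) : bool := (ev w (k, false)).2.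

Ltac cases_eq :=
  repeat match goal with
  | |- context [?a == ?b] =>
      lazymatch a with context [if _ then _ else _] => fail | _ =>
      lazymatch b with context [if _ then _ else _] => fail | _ =>
        case: (@eqP nat a b) => ? /=
      end end
  end.

Ltac fin := solve [ congruence | lia | (f_equal; solve [lia | by case: (_ : bool) | congruence | by rewrite ?addbA ?addbb | idtac]) ].

Lemma rel_ev n l r : Defs.rel n l r -> forall x, ev l x = ev r x.
Proof.
move=> H [k b]; case: H => * /=; rewrite /swap; cases_eq; unfold far in *; try fin.
Qed.

Lemma act_invol g x : act g (act g x) = x.
Proof.
case: x => k b; case: g => i /=; rewrite /swap; cases_eq; try fin.
Qed.

Lemma ev_cat u v x : ev (u ++ v) x = ev u (ev v x).
Proof. by elim: u => //= y u ->. Qed.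

Lemma phiP_cat u v k : phiP (u ++ v) k = phiP u (phiP v k).
Proof. by elim: u => //= y u IH; rewrite IH. Qed.

Lemma ev_fst w x : (ev w x).1 = phiP w x.1.
Proof. elim: w => //= [[g f] w IH]; case: g => i /=; by rewrite IH. Qed.

Lemma ev_snd w k b : (ev w (k,b)).2 = b (+) cw w k.
Proof.
rewrite /cw; elim: w => [|[g f] w IH] /=; first by rewrite addbF.
case: g => i /=; rewrite ?(IH b) //.
by rewrite IH !ev_fst /= addbCA.
Qed.

Lemma ev_form w k b : ev w (k,b) = (phiP w k, b (+) cw w k).
Proof. by rewrite -(ev_fst w (k,b)) -ev_snd -surjective_pairing. Qed.

Lemma cong n u v w1 w2 : tvb_eq n w1 w2 -> tvb_eq n (u ++ w1 ++ v) (u ++ w2 ++ v).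
Proof.
elim=> [w|w1' w2' _ IH|a b c _ IH1 _ IH2|u' v' x|u' v' l r Hr].
- exact: te_refl.
- exact: te_sym.
- exact: te_trans IH1 IH2.
- by move: (te_free n (u ++ u') (v' ++ v) x); rewrite -!catA.
- by move: (te_rel (u ++ u') (v' ++ v) Hr); rewrite -!catA.
Qed.

Lemma cong_cons n x w1 w2 : tvb_eq n w1 w2 -> tvb_eq n (x :: w1) (x :: w2).
Proof. by move=> H; move: (cong n [:: x] [::] _ _ H); rewrite !cats0. Qed.

Lemma tvb_ev n w1 w2 : tvb_eq n w1 w2 -> forall x, ev w1 x = ev w2 x.
Proof.
elim=> [w|a b _ IH|a b c _ IH1 _ IH2|u v [g f]|u v l r Hr] x //.
all: try by rewrite IH.
all: try by rewrite IH1 IH2.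
all: try by rewrite !ev_cat /= act_invol.
all: by rewrite !ev_cat (rel_ev n l r Hr).
Qed.

Lemma cw_cat u v k : cw (u ++ v) k = cw v k (+) cw u (phiP v k).
Proof. by rewrite {1}/cw ev_cat ev_form ev_snd addFb. Qed.

Lemma gam_phi a : all is_gam a -> forall k, phiP a k = k.
Proof. elim: a => //= [[g f] a IH] /andP[]; case: g => //= j _ /IH. Qed.

Definition canL (L : seq nat) (c : nat -> bool) : word :=
  map (fun m => P (Gam m)) (filter c L).
Definition psi n w := canL (iota 1 n) (cw w).

Lemma canL_gam L c : all is_gam (canL L c).
Proof. by rewrite /canL all_map; apply/allP. Qed.

Lemma canC m L c : canL (m :: L) c = if c m then P (Gam m) :: canL L c else canL L c.
Proof. by rewrite /canL /=; case: (c m). Qed.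

Lemma eq_canL L c1 c2 : {in L, c1 =1 c2} -> canL L c1 = canL L c2.
Proof. by move=> H; rewrite /canL (eq_in_filter H). Qed.

Lemma cw_canL L c k : uniq L -> cw (canL L c) k = (k \in L) && c k.
Proof.
elim: L => //= m L IH /andP[mL uL]; rewrite canC in_cons.
case cm: (c m).
- rewrite {1}/cw /= ev_fst (gam_phi _ (canL_gam L c)) /= -/(cw (canL L c) k) IH //.
  case: (eqVneq k m) => [->|km] /=; first by rewrite (negbTE mL) cm.
  by [].
- rewrite IH //; case: (eqVneq k m) => [->|km] //=; by rewrite cm andbF.
Qed.

Lemma ins n L c j : uniq L -> all (fun m => 0 < m <= n) L -> j \in L ->
  tvb_eq n (P (Gam j) :: canL L c) (canL L (fun k => (k == j) (+) c k)).
Proof.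
elim: L => //= m L IH /andP[mL uL] /andP[hm hL]; rewrite in_cons !canC.
case: (eqVneq j m) => [->|jm] /= => [_|jL].
  have -> : canL L (fun k => (k == m) (+) c k) = canL L c.
    apply: eq_canL => k kL /=. have -> : (k == m) = false.
      by apply/eqP => E; move: mL; rewrite -E kL.
    by [].
  case: (c m) => /=.
  + exact: (@te_rel n [::] (canL L c) _ _ (@r_gsq n m hm)).
  + exact: te_refl.
  case: (c m) => /=.
  + apply: (te_trans _ (cong_cons n (P (Gam m)) _ _ (IH uL hL jL))).
    have hj : 0 < j <= n by move/allP: hL => /(_ j jL).
    exact: (@te_rel n [::] (canL L c) _ _ (@r_gcomm n j m hj hm)).
  + exact: IH.
Qed.

Lemma iota_range n : all (fun m => 0 < m <= n) (iota 1 n).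
Proof. apply/allP => m; rewrite mem_iota; lia. Qed.

Lemma gam_flag n j f a : 0 < j <= n ->
  tvb_eq n ((Gam j, f) :: a) (P (Gam j) :: a).
Proof.
move=> hj; case: f; last exact: te_refl.
apply: te_trans (@te_free n [::] (P (Gam j) :: a) (Inv (Gam j))).
apply: te_sym.
exact: (@te_rel n [:: Inv (Gam j)] a _ _ (@r_gsq n j hj)).
Qed.

Lemma gam_can n a : valid n a -> all is_gam a -> tvb_eq n a (psi n a).
Proof.
elim: a => [|[g f] a IH] /=.
  move=> _ _; rewrite /psi /canL.
  have -> : filter (cw [::]) (iota 1 n) = [::].
    by elim: (iota 1 n) => //= m L IHL; rewrite /cw /=.
  exact: te_refl.
case: g => //= j /andP[hj va] ga.
apply: (te_trans (gam_flag n j f a hj)).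
apply: (te_trans (cong_cons n (P (Gam j)) _ _ (IH va ga))).
rewrite /psi.
have -> : canL (iota 1 n) (cw ((Gam j, f) :: a)) =
          canL (iota 1 n) (fun k => (k == j) (+) cw a k).
  apply: eq_canL => k _; rewrite /cw /= ev_fst (gam_phi _ ga) //.
apply: ins; [exact: iota_uniq | exact: iota_range | rewrite mem_iota; lia].
Qed.

Lemma psi_eq_in n w1 w2 : {in iota 1 n, cw w1 =1 cw w2} -> psi n w1 = psi n w2.
Proof. exact: eq_canL. Qed.

Lemma psi_nil n : psi n [::] = [::].
Proof. by rewrite /psi /canL; elim: (iota 1 n) => //= m L IHL; rewrite /cw /=. Qed.

Lemma psi_valid n w : valid n (psi n w).
Proof.
rewrite /valid /psi /canL all_map; apply/allP => m /=.
rewrite mem_filter mem_iota => /andP[_]; lia.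
Qed.

Lemma psi_inA n w : in_A n (psi n w).
Proof.
split; first exact: psi_valid.
exists (psi n w); split; [exact: psi_valid | exact: canL_gam | exact: te_refl].
Qed.

Lemma cw_psi n w k : k \in iota 1 n -> cw (psi n w) k = cw w k.
Proof. by move=> kn; rewrite /psi cw_canL ?iota_uniq // kn. Qed.

Lemma psi_tvb n w1 w2 : tvb_eq n w1 w2 -> psi n w1 = psi n w2.
Proof. by move=> H; apply: psi_eq_in => k _; rewrite /cw (tvb_ev _ _ _ H). Qed.

Lemma ev_rev s x : ev (rev s) (ev s x) = x.
Proof.
elim: s x => //= y s IH x.
by rewrite rev_cons -cats1 ev_cat /= act_invol IH.
Qed.

Lemma ev_revR R mid x : (forall y, ev mid y = y) -> ev (R ++ mid ++ rev R) x = x.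
Proof. by move=> H; rewrite !ev_cat H; have := ev_rev (rev R) x; rewrite revK. Qed.

Lemma ev_lam k l x : ev (lam k l) x = x.
Proof.
rewrite /lam; case: ifP => _; apply: ev_revR => -[k' b] /=; rewrite /swap;
  cases_eq; try fin.
Qed.

Lemma ev_mapflip u x : ev (map flip u) x = ev u x.
Proof. by elim: u => //= y u ->. Qed.

Lemma valid_winv n u : valid n (winv u) = valid n u.
Proof. by rewrite /valid /winv all_rev all_map; apply: eq_all. Qed.

Lemma valid_cat n u v : valid n (u ++ v) = valid n u && valid n v.
Proof. by rewrite /valid all_cat. Qed.

Lemma winv_facts u : (forall k, phiP u k = k) ->
  forall k, phiP (winv u) k = k /\ cw (winv u) k = cw u k.
Proof.
move=> Hu k.
have E : ev (winv u) (ev u (k, false)) = (k, false).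
  by rewrite /winv -(ev_mapflip u) ev_rev.
rewrite ev_form Hu addFb ev_form in E; case: E => -> E2; split => //.
by move: E2; case: (cw u k); case: (cw (winv u) k).
Qed.

Lemma flipK x : flip (flip x) = x.
Proof. by case: x => g []. Qed.

Lemma winv_cancel n s : tvb_eq n (winv s ++ s) [::].
Proof.
elim: s => [|x s IH]; first exact: te_refl.
rewrite /winv /= rev_cons -cats1 -catA /=.
apply: te_trans IH.
by move: (te_free n (rev (map flip s)) s (flip x)); rewrite flipK.
Qed.

Theorem mainTheorem5 (n : nat) (hn : 2 <= n) :
  exists psi : word -> word,
    (* psi_P : TVP_n -> A_n *)
    (forall w, in_TVP n w -> in_A n (psi w)) /\
    (* well defined on group elements *)
    (forall w1 w2, in_TVP n w1 -> in_TVP n w2 -> tvb_eq n w1 w2 ->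
       tvb_eq n (psi w1) (psi w2)) /\
    (* homomorphism *)
    (forall w1 w2, in_TVP n w1 -> in_TVP n w2 ->
       tvb_eq n (psi (w1 ++ w2)) (psi w1 ++ psi w2)) /\
    (* psi(lambda_kl) = e *)
    (forall k l, 0 < k <= n -> 0 < l <= n -> k != l ->
       tvb_eq n (psi (lam k l)) [::]) /\
    (* psi(gamma_j) = gamma_j *)
    (forall j, 0 < j <= n -> tvb_eq n (psi [:: P (Gam j)]) [:: P (Gam j)]) /\
    (* identity on A_n *)
    (forall a, in_A n a -> tvb_eq n (psi a) a) /\
    (* surjective onto A_n *)
    (forall a, in_A n a -> exists w, in_TVP n w /\ tvb_eq n (psi w) a) /\
    (* TVP_n = PL_n x| A_n, with PL_n = ker psi_P *)
    (let PL := fun w => in_TVP n w /\ tvb_eq n (psi w) [::] in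
       (forall p u, PL p -> in_TVP n u -> PL (winv u ++ p ++ u)) /\
       (forall w, PL w -> in_A n w -> tvb_eq n w [::]) /\
       (forall w, in_TVP n w ->
          exists p a, [/\ PL p, in_A n a & tvb_eq n w (p ++ a)])).
Proof.
have idA : forall a, in_A n a -> tvb_eq n (psi n a) a.
  move=> a [va [a' [va' ga' Ea]]].
  rewrite (psi_tvb _ _ _ Ea); apply: te_sym; apply: te_trans Ea _.
  exact: gam_can.
exists (psi n); split; first by move=> w _; exact: psi_inA.
split; first by move=> w1 w2 _ _ H; rewrite (psi_tvb _ _ _ H); exact: te_refl.
split.
  move=> w1 w2 [v1 p1] [v2 p2].
  have gs : all is_gam (psi n w1 ++ psi n w2) by rewrite all_cat !canL_gam.
  have -> : psi n (w1 ++ w2) = psi n (psi n w1 ++ psi n w2).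
    apply: psi_eq_in => k kn.
    rewrite !cw_cat p2 (gam_phi _ (canL_gam _ _)) !cw_psi //.
  apply: te_sym; apply: gam_can => //; by rewrite valid_cat !psi_valid.
split.
  move=> k l _ _ _; rewrite (@psi_eq_in n _ [::]) ?psi_nil; first exact: te_refl.
  by move=> j _; rewrite /cw ev_lam.
split.
  move=> j hj; apply: te_sym; apply: gam_can => //=; by rewrite hj.
split; first exact: idA.
split.
  move=> a Ha; exists a; split; last exact: idA.
  case: Ha => va [a' [va' ga' Ea]]; split => // k.
  by rewrite -(ev_fst a (k, false)) (tvb_ev _ _ _ Ea) ev_fst (gam_phi _ ga').
cbv zeta; split.
  move=> p u [[vp pp] Pp] [vu pu]; split.
    split; first by rewrite !valid_cat valid_winv vp vu.
    move=> k; rewrite !phiP_cat pu pp; exact: (winv_facts _ pu k).1.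
  rewrite (@psi_eq_in n _ [::]) ?psi_nil; first exact: te_refl.
  move=> j jn.
  have cp : cw p j = false by rewrite -(cw_psi n p j jn) /cw (tvb_ev _ _ _ Pp).
  rewrite !cw_cat phiP_cat !pu pp (winv_facts _ pu j).2 cp.
  by rewrite addbF addbb /cw.
split.
  move=> w [_ Pw] [vw [a' [va' ga' Ea]]].
  apply: (te_trans Ea); apply: (te_trans (gam_can n a' va' ga')).
  by rewrite -(psi_tvb _ _ _ Ea).
move=> w [vw pw]; exists (w ++ winv (psi n w)), (psi n w); split.
- have gp : forall k, phiP (psi n w) k = k by apply: gam_phi; exact: canL_gam.
  split.
    split; first by rewrite valid_cat valid_winv vw psi_valid.
    by move=> k; rewrite phiP_cat (winv_facts _ gp k).1 pw.
  rewrite (@psi_eq_in n _ [::]) ?psi_nil; first exact: te_refl.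
  move=> j jn; rewrite cw_cat (winv_facts _ gp j).2 (winv_facts _ gp j).1 cw_psi //.
  by rewrite addbb.
- exact: psi_inA.
- apply: te_sym; rewrite -catA.
  by move: (cong n w [::] _ _ (winv_cancel n (psi n w))); rewrite !cats0.
Qed.
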